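(* For an oriented, augmented, right-angled hexagon $(\vec{L}_1,\vec{F}_2,\vec{L}_3,\vec{F}_4,\vec{L}_5,\vec{F}_6)$ in $\mathbb{H}^4$ with any choice of $\{e_1,e_2\}$-quaternion half side-lengths $\delta_1,\delta_3,\delta_5$ and $e_2$-complex half side-lengths $\delta_2,\delta_4,\delta_6$, the following formulas hold: \begin{eqnarray*} & & \sinh\delta_1 \cosh\delta_2 \sinh\delta_3 + \cosh\delta_1 \cosh\delta_2 \cosh\delta_3 \\ &=& \varepsilon\,(\sinh\delta_4 \cosh\delta_5 \sinh\delta_6 + \cosh\delta_4 \cosh\delta_5 \cosh\delta_6)^*; \\ & & \sinh\delta_1 \cosh\delta_2 \cosh\delta_3 + \cosh\delta_1 \cosh\delta_2 \sinh\delta_3 \\ &=& \varepsilon\,(\sinh\delta_4 \sinh\delta_5 \sinh\delta_6 - \cosh\delta_4 \sinh\delta_5 \cosh\delta_6)^*; \\ & & \sinh\delta_1 \sinh\delta_2 \sinh\delta_3 - \cosh\delta_1 \sinh\delta_2 \cosh\delta_3 \\ &=& \varepsilon\,(\sinh\delta_4 \cosh\delta_5 \cosh\delta_6 + \cosh\delta_4 \cosh\delta_5 \sinh\delta_6)^*; \\ & & \sinh\delta_1 \sinh\delta_2 \cosh\delta_3 - \cosh\delta_1 \sinh\delta_2 \sinh\delta_3 \\ &=& \varepsilon\,(\sinh\delta_4 \sinh\delta_5 \cosh\delta_6 - \cosh\delta_4 \sinh\delta_5 \sinh\delta_6)^*, \end{eqnarray*} with $\varepsilon = 1$ or $-1$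 (the same $\varepsilon$ in all four identities), depending on the choices of the six half side-lengths $\{\delta_n\}_{n=1}^{6}$.
   Context: $\mathbb{A}_2$ is the Clifford algebra $\mathsf{Cl}_{0,2}$: the real associative algebra generated by $e_1,e_2$ with $e_1^2=e_2^2=-1$, $e_1e_2+e_2e_1=0$ (isomorphic to the quaternions). Its reverse involution is $(x_0+x_1e_1+x_2e_2+x_{12}e_1e_2)^*=x_0+x_1e_1+x_2e_2-x_{12}e_1e_2$, and $(ab)^*=b^*a^*$. For $x\in\mathbb{A}_2$, $\exp x=\sum_{m\ge0}x^m/m!$, $\cosh x=(\exp x+\exp(-x^* ))/2$, $\sinh x=(\exp x-\exp(-x^* ))/2$; $\log$ denotes the multivalued inverse of $\exp$. A nonzero $a\in\mathbb{A}_2$ is written $a=|a|(\cos\theta+u\sin\theta)$ with $u$ a unit element with zero real part ($u^2=-1$; unique up to sign if $a\notin\mathbb{R}$, arbitrary if $a\in\mathbb{R}$); its periods are $2m\pi u$, $m\in\mathbb{Z}$. $\mathbb{H}^4$ is the upper half-space $\{x_0+x_1e_1+x_2e_2+x_3e_3: x_3>0\}$ (inside the Clifford algebra $\mathsf{Cl}_{0,3}$) with boundary $(\mathbb{R}+\mathbb{R}e_1+\mathbb{R}e_2)\cup\{\infty\}$, oriented by the ordered frame at $e_3$ given by the oriented geodesics from $-1$ to $1$, $-e_1$ to $e_1$, $-e_2$ to $e_2$, $0$ to $\infty$. Orientation-preserving isometries of $\mathbb{H}^4$ are the Möbius maps $x\mapsto(ax+b)(cx+d)^{-1}$ given by Vahlen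 matrices $\pm\begin{pmatrix}a&b\\c&d\end{pmatrix}$ with $a,b,c,d\in\mathbb{A}_2$, $ad^*-bc^*=1$, $ab^*,cd^*\in\mathbb{R}+\mathbb{R}e_1+\mathbb{R}e_2$. Write $\vec{L}_{[u,v]}$ for the geodesic from $u$ to $v$; $\vec{L}_{\rm v}=\vec{L}_{[0,\infty]}$; $\vec{F}_{\rm h}=(\vec{L}_{[-1,1]},\vec{\Pi}_{\rm h})$ where $\vec{\Pi}_{\rm h}$ is the plane containing $L_{[-1,1]}$ and $L_{[-e_1,e_1]}$ oriented by this ordered pair. A flag $(L,\Pi)$ is a line $L$ contained in a totally geodesic plane $\Pi$; an oriented flag has both oriented. A line $L'$ and a flag $(L,\Pi)$ are orthogonal if $L'$ meets $L$ and is perpendicular to $\Pi$. An oriented augmented right-angled hexagon $(\vec{L}_1,\vec{F}_2,\vec{L}_3,\vec{F}_4,\vec{L}_5,\vec{F}_6)$ consists of oriented lines $\vec{L}_1,\vec{L}_3,\vec{L}_5$ and oriented flags $\vec{F}_n=(\vec{L}_n,\vec{\Pi}_n)$, $n=2,4,6$, with each consecutive pair (indices mod 6) orthogonal. For $n=1,3,5$: let $\iota$ be the orientation-preserving isometry with $\iota(\vec{L}_n)=\vec{L}_{\rm v}$, $\iota(\vec{F}_{n-1})=\vec{F}_{\rm h}$; the orientation-preserving isometry fixing $\vec{L}_{\rm v}$ and sending $\vec{F}_{\rm h}$ to $\iota(\vec{F}_{n+1})$ has Vahlen matrices $\pm\mathrm{diag}(a,(a^* )^{-1})$; a quaternion half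 side-length is $\delta_n\in\log(\pm a)$, taken modulo period. For $n=2,4,6$: let $\iota$ satisfy $\iota(\vec{F}_n)=\vec{F}_{\rm h}$, $\iota(\vec{L}_{n-1})=\vec{L}_{\rm v}$; the orientation-preserving isometry preserving $\vec{F}_{\rm h}$ and sending $\vec{L}_{\rm v}$ to $\iota(\vec{L}_{n+1})$ has Vahlen matrices $\pm\begin{pmatrix}\cosh\delta_n&\sinh\delta_n\\ \sinh\delta_n&\cosh\delta_n\end{pmatrix}$ with $\delta_n\in\mathbb{R}+\mathbb{R}e_2$ modulo $2\pi e_2$, determined up to adding $\pi e_2$; this is an $e_2$-complex half side-length. *)

(* Defs.v *)
From Stdlib Require Import Reals Factorial.
From Coquelicot Require Import Coquelicot.
Open Scope R_scope.

(* The algebra A_2 = Cl_{0,2}: x = x0 + x1 e1 + x2 e2 + x12 e1e2.       *)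
(* Fields: q0 = x0, q1 = x1, q2 = x2, q3 = x12.                          *)
(* e1^2 = e2^2 = -1, e1e2 = -e2e1 (so (e1,e2,e1e2) = quaternions i,j,k). *)
Record A2 := mkA { q0 : R; q1 : R; q2 : R; q3 : R }.

Definition A0 : A2 := mkA 0 0 0 0.
Definition A1 : A2 := mkA 1 0 0 0.
Definition rA (r : R) : A2 := mkA r 0 0 0.
Definition Ae1 : A2 := mkA 0 1 0 0.
Definition Ae2 : A2 := mkA 0 0 1 0.

Definition addA (x y : A2) : A2 :=
  mkA (q0 x + q0 y) (q1 x + q1 y) (q2 x + q2 y) (q3 x + q3 y).
Definition oppA (x : A2) : A2 := mkA (- q0 x) (- q1 x) (- q2 x) (- q3 x).
Definition subA (x y : A2) : A2 := addA x (oppA y).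
Definition scaleA (r : R) (x : A2) : A2 :=
  mkA (r * q0 x) (r * q1 x) (r * q2 x) (r * q3 x).
Definition mulA (x y : A2) : A2 :=
  mkA (q0 x * q0 y - q1 x * q1 y - q2 x * q2 y - q3 x * q3 y)
      (q0 x * q1 y + q1 x * q0 y + q2 x * q3 y - q3 x * q2 y)
      (q0 x * q2 y - q1 x * q3 y + q2 x * q0 y + q3 x * q1 y)
      (q0 x * q3 y + q1 x * q2 y - q2 x * q1 y + q3 x * q0 y).

(* reverse involution: (x0+x1e1+x2e2+x12e1e2)^* = x0+x1e1+x2e2-x12e1e2 *)
Definition revA (x : A2) : A2 := mkA (q0 x) (q1 x) (q2 x) (- q3 x).

(* multiplicative inverse in the division algebra A_2 (0 for x = 0) *)
Definition norm2A (x : A2) : R := q0 x ^ 2 + q1 x ^ 2 + q2 x ^ 2 + q3 x ^ 2.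
Definition invA (x : A2) : A2 :=
  scaleA (/ norm2A x) (mkA (q0 x) (- q1 x) (- q2 x) (- q3 x)).

Definition is_vec (x : A2) : Prop := q3 x = 0.

Fixpoint powA (x : A2) (m : nat) : A2 :=
  match m with O => A1 | S k => mulA x (powA x k) end.

Definition expA (x : A2) : A2 :=
  mkA (Series (fun m => q0 (powA x m) / INR (Factorial.fact m)))
      (Series (fun m => q1 (powA x m) / INR (Factorial.fact m)))
      (Series (fun m => q2 (powA x m) / INR (Factorial.fact m)))
      (Series (fun m => q3 (powA x m) / INR (Factorial.fact m))).

Definition coshA (x : A2) : A2 :=
  scaleA (/ 2) (addA (expA x) (expA (oppA (revA x)))).
Definition sinhA (x : A2) : A2 :=
  scaleA (/ 2) (subA (expA x) (expA (oppA (revA x)))).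

Definition A2_eq_dec (x y : A2) : {x = y} + {x <> y}.
Proof. decide equality; apply Req_EM_T. Defined.

(* dH^4 = (R + R e1 + R e2) u {oo}  (None = oo).                        *)
Record Vahlen := mkV { va : A2; vb : A2; vc : A2; vd : A2 }.

Definition is_vahlen (M : Vahlen) : Prop :=
  subA (mulA (va M) (revA (vd M))) (mulA (vb M) (revA (vc M))) = A1 /\
  is_vec (mulA (va M) (revA (vb M))) /\
  is_vec (mulA (vc M) (revA (vd M))).

Definition Bdry := option A2.

Definition is_bdry (p : Bdry) : Prop :=
  match p with None => True | Some x => is_vec x end.

Definition mob (M : Vahlen) (p : Bdry) : Bdry :=
  match p with
  | None => if A2_eq_dec (vc M) A0 then None
            else Some (mulA (va M) (invA (vc M)))
  | Some x =>
      let den := addA (mulA (vc M) x) (vd M) in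
      if A2_eq_dec den A0 then None
      else Some (mulA (addA (mulA (va M) x) (vb M)) (invA den))
  end.

(* Oriented lines: L_[u,v] is encoded by its ordered pair of endpoints. *)
Definition Line := (Bdry * Bdry)%type.

Definition is_line (L : Line) : Prop :=
  is_bdry (fst L) /\ is_bdry (snd L) /\ fst L <> snd L.

Definition line_act (M : Vahlen) (L : Line) : Line :=
  (mob M (fst L), mob M (snd L)).

Definition Lv : Line := (Some A0, None).

(* Oriented flags (L, Pi): encoded by the oriented line L = L_[u,v]     *)
(* together with the ideal boundary of the positive half-plane of Pi   *)
(* bounded by L (an open arc of the circle dPi; this encodes the       *)
(* orientation of Pi given that of L).                                 *)
Record Flag := mkF { fl_line : Line; fl_arc : Bdry -> Prop }.

Definition flag_act (M : Vahlen) (F : Flag) : Flag :=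
  mkF (line_act M (fl_line F))
      (fun y => exists x, fl_arc F x /\ y = mob M x).

(* F_h = (L_[-1,1], Pi_h), Pi_h oriented by (L_[-1,1], L_[-e1,e1]):
   the positive side of L_[-1,1] in Pi_h is the one containing e1, whose
   ideal boundary is the arc {cos t + e1 sin t : 0 < t < pi}. *)
Definition Fh : Flag :=
  mkF (Some (rA (-1)), Some A1)
      (fun y => exists t, 0 < t < PI /\ y = Some (mkA (cos t) (sin t) 0 0)).

(* oriented flags of H^4 = images of F_h under orientation-preserving
   isometries *)
Definition is_flag (F : Flag) : Prop :=
  exists M, is_vahlen M /\ F = flag_act M Fh.

(* The half-turn about Pi_h (the
   orientation-preserving isometry fixing Pi_h pointwise) acts on the
   boundary by x |-> sigma(x)/|x|^2, sigma flipping the e2-coordinate.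
   A line is perpendicular to Pi_h iff this half-turn swaps its
   endpoints; it meets L_[-1,1] (= Pi_h  n  {x1 = 0}) iff moreover it lies
   in the hyperplane {x1 = 0}, i.e. its endpoints lie in (R + R e2) u {oo}. *)
Definition halfturn_h (p : Bdry) : Bdry :=
  match p with
  | None => Some A0
  | Some x => if A2_eq_dec x A0 then None
              else Some (scaleA (/ norm2A x) (mkA (q0 x) (q1 x) (- q2 x) (q3 x)))
  end.

Definition in_x1_zero (p : Bdry) : Prop :=
  match p with None => True | Some x => q1 x = 0 /\ q3 x = 0 end.

Definition orth_std (L : Line) : Prop :=
  in_x1_zero (fst L) /\ in_x1_zero (snd L) /\ fst L <> snd L /\
  halfturn_h (fst L) = snd L.

Definition orthogonal (L' : Line) (F : Flag) : Prop :=
  exists M, is_vahlen M /\ flag_act M F = Fh /\ orth_std (line_act M L').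

Definition diagV (a : A2) : Vahlen := mkV a A0 A0 (invA (revA a)).

Definition Mdelta (d : A2) : Vahlen := mkV (coshA d) (sinhA d) (sinhA d) (coshA d).

(* n odd: delta is a quaternion half side-length of L_n, with neighbours
   F_{n-1} (Fprev) and F_{n+1} (Fnext). *)
Definition quat_hsl (d : A2) (Ln : Line) (Fprev Fnext : Flag) : Prop :=
  exists (iota : Vahlen) (a : A2),
    is_vahlen iota /\ line_act iota Ln = Lv /\ flag_act iota Fprev = Fh /\
    a <> A0 /\ is_vahlen (diagV a) /\ line_act (diagV a) Lv = Lv /\
    flag_act (diagV a) Fh = flag_act iota Fnext /\
    (expA d = a \/ expA d = oppA a).

(* n even: delta in R + R e2 is an e2-complex half side-length of F_n,
   with neighbours L_{n-1} (Lprev) and L_{n+1} (Lnext). *)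
Definition cplx_hsl (d : A2) (Fn : Flag) (Lprev Lnext : Line) : Prop :=
  q1 d = 0 /\ q3 d = 0 /\
  exists iota : Vahlen,
    is_vahlen iota /\ flag_act iota Fn = Fh /\ line_act iota Lprev = Lv /\
    is_vahlen (Mdelta d) /\ flag_act (Mdelta d) Fh = Fh /\
    line_act (Mdelta d) Lv = line_act iota Lnext.

(* Main.v *)
From Stdlib Require Import Reals Lra Psatz Lia FunctionalExtensionality PropExtensionality.
From Coquelicot Require Import Coquelicot.
Require Import Defs.
Open Scope R_scope.

Lemma A2eq (x y : A2) : q0 x = q0 y -> q1 x = q1 y -> q2 x = q2 y -> q3 x = q3 y -> x = y.
Proof. destruct x, y; simpl; intros; subst; reflexivity. Qed.

Ltac a2ring := intros; repeat (match goal with H : ?P |- _ => match type of P with Prop => clear H end end); repeat (match goal with x : A2 |- _ => destruct x end);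
  apply A2eq; unfold mulA, addA, subA, oppA, scaleA, revA, rA, A0, A1, Ae1, Ae2; simpl; ring.

Lemma mulA_assoc x y z : mulA x (mulA y z) = mulA (mulA x y) z. Proof. a2ring. Qed.
Lemma mulA_addl x y z : mulA (addA x y) z = addA (mulA x z) (mulA y z). Proof. a2ring. Qed.
Lemma mulA_addr x y z : mulA x (addA y z) = addA (mulA x y) (mulA x z). Proof. a2ring. Qed.
Lemma mulA_1l x : mulA A1 x = x. Proof. a2ring. Qed.
Lemma mulA_1r x : mulA x A1 = x. Proof. a2ring. Qed.
Lemma mulA_0l x : mulA A0 x = A0. Proof. a2ring. Qed.
Lemma mulA_0r x : mulA x A0 = A0. Proof. a2ring. Qed.
Lemma addA_0r x : addA x A0 = x. Proof. a2ring. Qed.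
Lemma addA_0l x : addA A0 x = x. Proof. a2ring. Qed.
Lemma revA_mul x y : revA (mulA x y) = mulA (revA y) (revA x). Proof. a2ring. Qed.
Lemma revA_rev x : revA (revA x) = x. Proof. a2ring. Qed.
Lemma revA_1 : revA A1 = A1. Proof. a2ring. Qed.
Lemma revA_0 : revA A0 = A0. Proof. a2ring. Qed.
Lemma vec_rev x : is_vec x -> revA x = x.
Proof. destruct x; unfold is_vec, revA; simpl; intros ->; f_equal; ring. Qed.

Lemma norm2_mul x y : norm2A (mulA x y) = norm2A x * norm2A y.
Proof. destruct x, y; unfold norm2A, mulA; simpl; ring. Qed.
Lemma norm2_ge0 x : 0 <= norm2A x.
Proof. destruct x; unfold norm2A; simpl; nra. Qed.
Lemma norm2_0 x : norm2A x = 0 -> x = A0.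
Proof. destruct x as [a b c d]; unfold norm2A; simpl; intros H.
  assert (a = 0) by nra; assert (b = 0) by nra; assert (c = 0) by nra; assert (d = 0) by nra.
  subst; reflexivity. Qed.
Lemma norm2_nz x : x <> A0 -> norm2A x <> 0.
Proof. intros H E; apply H, norm2_0, E. Qed.

Lemma mul_invA x : x <> A0 -> mulA x (invA x) = A1.
Proof. intros H; apply norm2_nz in H; destruct x as [a b c d]; unfold norm2A in *; simpl in *.
  assert (H' : a*a+b*b+c*c+d*d <> 0) by (intro E; apply H; nra).
  apply A2eq; unfold mulA, invA, scaleA, norm2A; simpl; field; auto. Qed.
Lemma invA_mul x : x <> A0 -> mulA (invA x) x = A1.
Proof. intros H; apply norm2_nz in H; destruct x as [a b c d]; unfold norm2A in *; simpl in *.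
  assert (H' : a*a+b*b+c*c+d*d <> 0) by (intro E; apply H; nra).
  apply A2eq; unfold mulA, invA, scaleA, norm2A; simpl; field; auto. Qed.

Lemma A1_nz : A1 <> A0.
Proof. intro H; injection H; lra. Qed.

Lemma mul_nz x y : x <> A0 -> y <> A0 -> mulA x y <> A0.
Proof. intros Hx Hy E. apply norm2_nz in Hx; apply norm2_nz in Hy.
  assert (norm2A (mulA x y) = 0) by (rewrite E; unfold norm2A; simpl; ring).
  rewrite norm2_mul in H. apply Rmult_integral in H; tauto. Qed.

Lemma mul_one_nzl x y : mulA x y = A1 -> x <> A0.
Proof. intros H E; subst; rewrite mulA_0l in H; apply A1_nz; auto. Qed.
Lemma mul_one_nzr x y : mulA x y = A1 -> y <> A0.
Proof. intros H E; subst; rewrite mulA_0r in H; apply A1_nz; auto. Qed.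

Lemma inv_unique x y : mulA x y = A1 -> y = invA x.
Proof. intros H. assert (Hx := mul_one_nzl _ _ H).
  rewrite <- (mulA_1l y), <- (invA_mul x Hx), <- mulA_assoc, H, mulA_1r; auto. Qed.

Lemma mul_comm_one x y : mulA x y = A1 -> mulA y x = A1.
Proof. intros H. rewrite (inv_unique _ _ H). apply invA_mul, (mul_one_nzl _ _ H). Qed.

Lemma zero_prod x y : x <> A0 -> mulA x y = A0 -> y = A0.
Proof. intros Hx H. rewrite <- (mulA_1l y), <- (invA_mul x Hx), <- mulA_assoc, H, mulA_0r; auto. Qed.
Lemma zero_prod_r x y : y <> A0 -> mulA x y = A0 -> x = A0.
Proof. intros Hy H. rewrite <- (mulA_1r x), <- (mul_invA y Hy), mulA_assoc, H, mulA_0l; auto. Qed.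

Lemma invA_mulA x y : x <> A0 -> y <> A0 -> invA (mulA x y) = mulA (invA y) (invA x).
Proof. intros Hx Hy. symmetry. apply inv_unique.
  rewrite mulA_assoc, <- (mulA_assoc x y), mul_invA, mulA_1r, mul_invA; auto. Qed.

Definition mulV (M N : Vahlen) : Vahlen :=
  mkV (addA (mulA (va M) (va N)) (mulA (vb M) (vc N)))
      (addA (mulA (va M) (vb N)) (mulA (vb M) (vd N)))
      (addA (mulA (vc M) (va N)) (mulA (vd M) (vc N)))
      (addA (mulA (vc M) (vb N)) (mulA (vd M) (vd N))).
Definition invV (M : Vahlen) : Vahlen :=
  mkV (revA (vd M)) (oppA (revA (vb M))) (oppA (revA (vc M))) (revA (va M)).
Definition IV : Vahlen := mkV A1 A0 A0 A1.
Definition scaleV (r : R) (M : Vahlen) : Vahlen :=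
  mkV (scaleA r (va M)) (scaleA r (vb M)) (scaleA r (vc M)) (scaleA r (vd M)).
Definition det1 (M : Vahlen) : Prop :=
  subA (mulA (va M) (revA (vd M))) (mulA (vb M) (revA (vc M))) = A1.

Lemma Veq M N : va M = va N -> vb M = vb N -> vc M = vc N -> vd M = vd N -> M = N.
Proof. destruct M, N; simpl; intros; subst; auto. Qed.

Ltac vring := intros; repeat (match goal with M : Vahlen |- _ => destruct M end);
  apply Veq; simpl; a2ring.

Lemma addA_swap x y z w : addA (addA x y) (addA z w) = addA (addA x z) (addA y w).
Proof. a2ring. Qed.
Lemma mulV_assoc M N P : mulV M (mulV N P) = mulV (mulV M N) P.
Proof. destruct M, N, P; unfold mulV; apply Veq; simpl;
  rewrite !mulA_addr, !mulA_addl, !mulA_assoc; apply addA_swap. Qed.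
Lemma mulV_IVl M : mulV IV M = M. Proof. vring. Qed.
Lemma mulV_IVr M : mulV M IV = M. Proof. vring. Qed.
Lemma mulV_scalel r M N : mulV (scaleV r M) N = scaleV r (mulV M N). Proof. vring. Qed.
Lemma mulV_scaler r M N : mulV M (scaleV r N) = scaleV r (mulV M N). Proof. vring. Qed.
Lemma scaleV_scaleV r s M : scaleV r (scaleV s M) = scaleV (r*s) M. Proof. vring. Qed.
Lemma scaleV_1 M : scaleV 1 M = M. Proof. vring. Qed.
Lemma scaleV_IV r M : mulV (scaleV r IV) M = scaleV r M. Proof. vring. Qed.

Lemma rev_vec_mul x y : is_vec (mulA x (revA y)) -> mulA y (revA x) = mulA x (revA y).
Proof. intros H. rewrite <- (vec_rev _ H), revA_mul, revA_rev; auto. Qed.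

Lemma F1 M : is_vahlen M -> mulV M (invV M) = IV.
Proof. destruct M as [a b c d]; intros [H1 [H2 H3]]; simpl in *.
  apply rev_vec_mul in H2; apply rev_vec_mul in H3.
  assert (H4 : subA (mulA d (revA a)) (mulA c (revA b)) = A1).
  { rewrite <- revA_1, <- H1. a2ring. }
  unfold mulV, invV, IV; simpl. apply Veq; simpl.
  - rewrite <- H1; a2ring.
  - transitivity (subA (mulA b (revA a)) (mulA a (revA b))); [a2ring|].
    rewrite H2; a2ring.
  - transitivity (subA (mulA c (revA d)) (mulA d (revA c))); [a2ring|].
    rewrite H3; a2ring.
  - rewrite <- H4; a2ring.
Qed.

Lemma mulA_subl x y z : mulA (subA x y) z = subA (mulA x z) (mulA y z). Proof. a2ring. Qed.
Lemma mulA_oppr x y : mulA x (oppA y) = oppA (mulA x y). Proof. a2ring. Qed.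
Lemma invA_mul_l x y : x <> A0 -> mulA (invA x) (mulA x y) = y.
Proof. intros H; rewrite mulA_assoc, invA_mul, mulA_1l; auto. Qed.
Lemma add0_opp x y : addA x y = A0 -> y = oppA x.
Proof. intros H. transitivity (subA (addA x y) x); [a2ring| rewrite H; a2ring]. Qed.

Lemma kernel a b c d y1 y2 :
  subA (mulA a (revA d)) (mulA b (revA c)) = A1 -> is_vec (mulA a (revA b)) ->
  addA (mulA a y1) (mulA b y2) = A0 -> addA (mulA c y1) (mulA d y2) = A0 ->
  y1 = A0 /\ y2 = A0.
Proof.
  intros H1 H2 E1 E2. apply rev_vec_mul in H2.
  assert (H4 : subA (mulA d (revA a)) (mulA c (revA b)) = A1).
  { rewrite <- revA_1, <- H1. a2ring. }
  destruct (A2_eq_dec a A0) as [Ha|Ha].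
  - subst a. rewrite mulA_0l, addA_0l in E1.
    assert (Hb : mulA (oppA b) (revA c) = A1) by (rewrite <- H1; a2ring).
    assert (Hb' := mul_one_nzl _ _ Hb).
    assert (Hc := mul_one_nzr _ _ Hb).
    assert (y2 = A0).
    { apply (zero_prod b); auto. intro E; apply Hb'; subst; a2ring. }
    subst y2. rewrite mulA_0r, addA_0r in E2. split; auto.
    apply (zero_prod c); auto. intro E; apply Hc; subst; a2ring.
  - assert (HW : mulA (subA d (mulA (mulA c (invA a)) b)) (revA a) = A1).
    { rewrite <- H4, mulA_subl, <- (mulA_assoc (mulA c (invA a)) b (revA a)), H2,
        <- !mulA_assoc, invA_mul_l; auto. }
    assert (HWy : mulA (subA d (mulA (mulA c (invA a)) b)) y2 = A0).
    { rewrite mulA_subl, <- !mulA_assoc, (add0_opp _ _ E1), !mulA_oppr, invA_mul_l; auto.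
      rewrite <- E2. generalize (mulA c y1) (mulA d y2); a2ring. }
    assert (y2 = A0) by (eapply zero_prod; [apply (mul_one_nzl _ _ HW)| exact HWy]).
    subst y2. rewrite mulA_0r, addA_0r in E1. split; auto. apply (zero_prod a); auto.
Qed.

Lemma F2 M : is_vahlen M -> mulV (invV M) M = IV.
Proof.
  intros HM. assert (E : mulV M (mulV (invV M) M) = M)
    by (rewrite mulV_assoc, F1, mulV_IVl; auto).
  destruct HM as [H1 [H2 H3]].
  remember (mulV (invV M) M) as Z. clear HeqZ.
  destruct M as [a b c d], Z as [z1 z2 z3 z4]; simpl in *.
  unfold mulV in E; simpl in E. injection E; intros E4 E3 E2 E1.
  destruct (kernel a b c d (subA z1 A1) z3 H1 H2) as [K1 K3].
  { transitivity (subA (addA (mulA a z1) (mulA b z3)) a); [a2ring| rewrite E1; a2ring]. }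
  { transitivity (subA (addA (mulA c z1) (mulA d z3)) c); [a2ring| rewrite E3; a2ring]. }
  destruct (kernel a b c d z2 (subA z4 A1) H1 H2) as [K2 K4].
  { transitivity (subA (addA (mulA a z2) (mulA b z4)) b); [a2ring| rewrite E2; a2ring]. }
  { transitivity (subA (addA (mulA c z2) (mulA d z4)) d); [a2ring| rewrite E4; a2ring]. }
  unfold IV; apply Veq; simpl; auto.
  - transitivity (addA (subA z1 A1) A1); [a2ring| rewrite K1; a2ring].
  - transitivity (addA (subA z4 A1) A1); [a2ring| rewrite K4; a2ring].
Qed.

Lemma invA_nz x : x <> A0 -> invA x <> A0.
Proof. intros H; apply (mul_one_nzr x); apply mul_invA; auto. Qed.
Lemma invA_invA x : x <> A0 -> invA (invA x) = x.
Proof. intros H; symmetry; apply inv_unique, invA_mul; auto. Qed.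

Ltac a2ac := repeat (match goal with |- context [mulA ?x ?y] => generalize (mulA x y); intro end); a2ring.

Lemma mob_frac a b c d u w : w <> A0 ->
  mob (mkV a b c d) (Some (mulA u (invA w))) =
  if A2_eq_dec (addA (mulA c u) (mulA d w)) A0 then None
  else Some (mulA (addA (mulA a u) (mulA b w)) (invA (addA (mulA c u) (mulA d w)))).
Proof.
  intros Hw. unfold mob; cbn [va vb vc vd].
  assert (E1 : addA (mulA c (mulA u (invA w))) d = mulA (addA (mulA c u) (mulA d w)) (invA w)).
  { rewrite mulA_addl, <- !mulA_assoc, mul_invA, mulA_1r; auto. }
  assert (E2 : addA (mulA a (mulA u (invA w))) b = mulA (addA (mulA a u) (mulA b w)) (invA w)).
  { rewrite mulA_addl, <- !mulA_assoc, mul_invA, mulA_1r; auto. }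
  rewrite E1, E2.
  destruct (A2_eq_dec (addA (mulA c u) (mulA d w)) A0) as [Z|Z].
  - rewrite Z, mulA_0l. destruct (A2_eq_dec A0 A0); congruence.
  - destruct (A2_eq_dec (mulA (addA (mulA c u) (mulA d w)) (invA w)) A0) as [Z'|Z'].
    + exfalso; revert Z'; apply mul_nz; auto; apply invA_nz; auto.
    + f_equal. rewrite invA_mulA, invA_invA, <- !mulA_assoc, (mulA_assoc (invA w)), invA_mul, mulA_1l;
        auto; apply invA_nz; auto.
Qed.

Lemma mob_comp M N K : mulV K N = IV -> forall p, mob (mulV M N) p = mob M (mob N p).
Proof.
  intros HK p. destruct M as [a b c d], N as [a' b' c' d'], K as [ka kb kc kd].
  assert (H11 := f_equal va HK); assert (H21 := f_equal vc HK); assert (H22 := f_equal vd HK).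
  unfold mulV, IV in H11, H21, H22; cbn [va vb vc vd] in H11, H21, H22. clear HK.
  unfold mulV; cbn [va vb vc vd]. destruct p as [x|].
  - set (u := addA (mulA a' x) b'). set (w := addA (mulA c' x) d').
    assert (Ed : addA (mulA (addA (mulA c a') (mulA d c')) x) (addA (mulA c b') (mulA d d'))
                 = addA (mulA c u) (mulA d w)).
    { unfold u, w. rewrite !mulA_addl, !mulA_addr, <- !mulA_assoc. a2ac. }
    assert (En : addA (mulA (addA (mulA a a') (mulA b c')) x) (addA (mulA a b') (mulA b d'))
                 = addA (mulA a u) (mulA b w)).
    { unfold u, w. rewrite !mulA_addl, !mulA_addr, <- !mulA_assoc. a2ac. }
    assert (Ek : addA (mulA kc u) (mulA kd w) = A1).
    { rewrite <- H22. transitivity (addA (mulA (addA (mulA kc a') (mulA kd c')) x)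
                                         (addA (mulA kc b') (mulA kd d'))).
      - unfold u, w. rewrite !mulA_addl, !mulA_addr, <- !mulA_assoc. a2ac.
      - rewrite H21, mulA_0l, addA_0l; auto. }
    assert (RN : mob (mkV a' b' c' d') (Some x) =
       if A2_eq_dec w A0 then None else Some (mulA u (invA w))) by reflexivity.
    assert (RL : mob (mkV (addA (mulA a a') (mulA b c')) (addA (mulA a b') (mulA b d'))
                          (addA (mulA c a') (mulA d c')) (addA (mulA c b') (mulA d d'))) (Some x) =
       if A2_eq_dec (addA (mulA c u) (mulA d w)) A0 then None
       else Some (mulA (addA (mulA a u) (mulA b w)) (invA (addA (mulA c u) (mulA d w))))).
    { unfold mob; cbn [va vb vc vd]. rewrite Ed, En. reflexivity. }
    rewrite RN, RL. clearbody u w.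
    destruct (A2_eq_dec w A0) as [Zw|Zw].
    + rewrite Zw in Ek |- *. rewrite mulA_0r, addA_0r in Ek |- *. rewrite mulA_0r, addA_0r.
      assert (Hu : u <> A0) by exact (mul_one_nzr _ _ Ek).
      unfold mob; cbn [va vb vc vd]. destruct (A2_eq_dec c A0) as [Zc|Zc].
      * rewrite Zc, mulA_0l. destruct (A2_eq_dec A0 A0); congruence.
      * destruct (A2_eq_dec (mulA c u) A0) as [Z|Z]; [exfalso; revert Z; apply mul_nz; auto|].
        f_equal. rewrite invA_mulA, <- !mulA_assoc, (mulA_assoc u), mul_invA, mulA_1l; auto.
    + rewrite mob_frac; auto.
  - assert (RN : mob (mkV a' b' c' d') None =
       if A2_eq_dec c' A0 then None else Some (mulA a' (invA c'))) by reflexivity.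
    assert (RL : mob (mkV (addA (mulA a a') (mulA b c')) (addA (mulA a b') (mulA b d'))
                          (addA (mulA c a') (mulA d c')) (addA (mulA c b') (mulA d d'))) None =
       if A2_eq_dec (addA (mulA c a') (mulA d c')) A0 then None
       else Some (mulA (addA (mulA a a') (mulA b c')) (invA (addA (mulA c a') (mulA d c'))))) by reflexivity.
    rewrite RN, RL. destruct (A2_eq_dec c' A0) as [Zc'|Zc'].
    + rewrite Zc' in H11 |- *. rewrite mulA_0r, addA_0r in H11.
      assert (Ha' : a' <> A0) by exact (mul_one_nzr _ _ H11).
      rewrite !mulA_0r, !addA_0r.
      unfold mob; cbn [va vb vc vd].
      destruct (A2_eq_dec c A0) as [Zc|Zc].
      * rewrite Zc, mulA_0l. destruct (A2_eq_dec A0 A0); congruence.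
      * destruct (A2_eq_dec (mulA c a') A0) as [Z|Z]; [exfalso; revert Z; apply mul_nz; auto|].
        f_equal. rewrite invA_mulA, <- !mulA_assoc, (mulA_assoc a'), mul_invA, mulA_1l; auto.
    + rewrite mob_frac; auto.
Qed.

Lemma mob_IV p : mob IV p = p.
Proof.
  destruct p as [x|]; unfold mob, IV; cbn [va vb vc vd].
  - rewrite mulA_0l, addA_0l. destruct (A2_eq_dec A1 A0) as [Z|Z]; [exfalso; apply A1_nz; auto|].
    f_equal. assert (invA A1 = A1) by (symmetry; apply inv_unique; a2ring).
    rewrite H, mulA_1l, addA_0r, mulA_1r; auto.
  - destruct (A2_eq_dec A0 A0); congruence.
Qed.

Lemma line_act_comp M N L : (forall p, mob (mulV M N) p = mob M (mob N p)) ->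
  line_act (mulV M N) L = line_act M (line_act N L).
Proof. intros H; unfold line_act; simpl; rewrite !H; auto. Qed.

Lemma flag_act_comp M N F : (forall p, mob (mulV M N) p = mob M (mob N p)) ->
  flag_act (mulV M N) F = flag_act M (flag_act N F).
Proof.
  intros H; unfold flag_act; simpl. rewrite line_act_comp; auto. f_equal.
  apply functional_extensionality; intros y. apply propositional_extensionality; split.
  - intros [x [Hx ->]]. exists (mob N x); split; auto. exists x; auto.
  - intros [z [[x [Hx ->]] ->]]. exists x; split; auto.
Qed.

Lemma line_act_id M L : (forall p, mob M p = p) -> line_act M L = L.
Proof. intros H; destruct L; unfold line_act; simpl; rewrite !H; auto. Qed.

Lemma flag_act_id M F : (forall p, mob M p = p) -> flag_act M F = F.
Proof.
  intros H; destruct F as [L A]; unfold flag_act; simpl. rewrite line_act_id; auto. f_equal.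
  apply functional_extensionality; intros y. apply propositional_extensionality; split.
  - intros [x [Hx ->]]. rewrite H; auto.
  - intros Hy. exists y; rewrite H; auto.
Qed.

Lemma mob_inv_l M : is_vahlen M -> forall p, mob (invV M) (mob M p) = p.
Proof. intros HM p. rewrite <- (mob_comp _ _ (invV M)), F2, mob_IV; auto. apply F2; auto. Qed.
Lemma mob_comp_inv M N : is_vahlen N -> forall p, mob (mulV M (invV N)) p = mob M (mob (invV N) p).
Proof. intros HN; apply (mob_comp _ _ N), F1; auto. Qed.
Lemma mob_comp_v M N : is_vahlen N -> forall p, mob (mulV M N) p = mob M (mob N p).
Proof. intros HN; apply (mob_comp _ _ (invV N)), F2; auto. Qed.

Lemma revA_add x y : revA (addA x y) = addA (revA x) (revA y). Proof. a2ring. Qed.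
Lemma revA_opp x : revA (oppA x) = oppA (revA x). Proof. a2ring. Qed.
Lemma mulA_oppl x y : mulA (oppA x) y = oppA (mulA x y). Proof. a2ring. Qed.

Lemma subA_xx x : subA x x = A0. Proof. a2ring. Qed.

Ltac qnorm := unfold subA; rewrite ?revA_add, ?revA_opp, ?revA_mul, ?mulA_addl, ?mulA_addr,
  ?mulA_oppl, ?mulA_oppr, <- ?mulA_assoc.

Lemma det_prod_id a b c d a' b' c' d' :
  subA (mulA (addA (mulA a a') (mulA b c')) (revA (addA (mulA c b') (mulA d d'))))
       (mulA (addA (mulA a b') (mulA b d')) (revA (addA (mulA c a') (mulA d c')))) =
  addA (addA (mulA a (mulA (subA (mulA a' (revA d')) (mulA b' (revA c'))) (revA d)))
             (mulA b (mulA (subA (mulA c' (revA b')) (mulA d' (revA a'))) (revA c))))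
       (addA (mulA a (mulA (subA (mulA a' (revA b')) (mulA b' (revA a'))) (revA c)))
             (mulA b (mulA (subA (mulA c' (revA d')) (mulA d' (revA c'))) (revA d)))).
Proof. qnorm. a2ac. Qed.

Lemma det1_mul M N : det1 M -> is_vahlen N -> det1 (mulV M N).
Proof.
  destruct M as [a b c d], N as [a' b' c' d']; unfold det1, is_vahlen, mulV; cbn [va vb vc vd].
  intros HM [H1 [H2 H3]].
  apply rev_vec_mul in H2; apply rev_vec_mul in H3.
  assert (H4 : subA (mulA c' (revA b')) (mulA d' (revA a')) = oppA A1).
  { rewrite <- revA_1, <- H1. a2ring. }
  rewrite det_prod_id, H1, H4, H2, H3, !subA_xx, !mulA_0l, !mulA_0r, mulA_oppl, !mulA_1l.
  rewrite <- HM, mulA_oppr. a2ac.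
Qed.

Lemma invV_vahlen M : is_vahlen M -> is_vahlen (invV M).
Proof.
  intros HM. assert (E := F2 M HM). destruct M as [a b c d].
  unfold invV, mulV, IV in E |- *; cbn [va vb vc vd] in E |- *.
  assert (E1 := f_equal va E); assert (E2 := f_equal vb E); assert (E3 := f_equal vc E).
  cbn [va vb vc vd] in E1, E2, E3.
  unfold is_vahlen; cbn [va vb vc vd]. split; [|split].
  - rewrite <- E1. a2ring.
  - unfold is_vec. assert (X : addA (mulA (revA d) b) (mulA (oppA (revA b)) d) = A0) by exact E2.
    revert X. destruct a, b, c, d; unfold is_vec, mulA, addA, oppA, revA, A0; simpl.
    intros X. injection X; intros. lra.
  - unfold is_vec. assert (X : addA (mulA (oppA (revA c)) a) (mulA (revA a) c) = A0) by exact E3.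
    revert X. destruct a, b, c, d; unfold is_vec, mulA, addA, oppA, revA, A0; simpl.
    intros X. injection X; intros. lra.
Qed.

Lemma norm2_rev x : norm2A (revA x) = norm2A x.
Proof. destruct x; unfold norm2A, revA; simpl; ring. Qed.

Lemma some_inj (x y : A2) : Some x = Some y -> x = y.
Proof. intros H; injection H; auto. Qed.

Lemma stab N : det1 N -> line_act N Lv = Lv -> flag_act N Fh = Fh ->
  exists e, (e = 1 \/ e = -1) /\ N = scaleV e IV.
Proof.
  intros HD HL HF. destruct N as [a b c d].
  assert (HL0 := f_equal fst HL); assert (HLi := f_equal snd HL).
  assert (HF1 := f_equal (fun F => snd (fl_line F)) HF).
  assert (HA := f_equal fl_arc HF).
  unfold line_act, Lv in HL0, HLi; cbn [fst snd] in HL0, HLi.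
  unfold flag_act, line_act, Fh in HF1; cbn [fst snd fl_line] in HF1.
  clear HL HF.
  assert (Hc : c = A0).
  { unfold mob in HLi; cbn [va vb vc vd] in HLi. destruct (A2_eq_dec c A0); auto; discriminate. }
  subst c.
  unfold mob in HL0; cbn [va vb vc vd] in HL0. rewrite mulA_0l, addA_0l in HL0.
  destruct (A2_eq_dec d A0) as [Zd|Zd]; [discriminate|].
  apply some_inj in HL0. rewrite mulA_0r, addA_0l in HL0.
  apply zero_prod_r in HL0; [|apply invA_nz; auto]. subst b.
  unfold mob in HF1; cbn [va vb vc vd] in HF1. rewrite mulA_0l, addA_0l in HF1.
  destruct (A2_eq_dec d A0) as [Zd'|Zd']; [discriminate|]. clear Zd'.
  apply some_inj in HF1. rewrite addA_0r, mulA_1r in HF1.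
  assert (Had : a = d).
  { rewrite <- (mulA_1r a), <- (invA_mul d), mulA_assoc, HF1, mulA_1l; auto. }
  subst d. clear HF1.
  unfold det1 in HD; cbn [va vb vc vd] in HD.
  assert (Haa : mulA a (revA a) = A1).
  { rewrite <- HD. a2ring. }
  clear HD.
  assert (Hinv : invA a = revA a) by (symmetry; apply inv_unique; auto).
  assert (Hy : fl_arc Fh (mob (mkV a A0 A0 a) (Some Ae1))).
  { rewrite <- HA. exists (Some Ae1). split; auto.
    exists (PI/2). split; [split; [apply PI2_RGT_0|]; generalize PI_RGT_0; lra|].
    rewrite cos_PI2, sin_PI2. reflexivity. }
  clear HA.
  unfold mob in Hy; cbn [va vb vc vd] in Hy. rewrite mulA_0l, addA_0l in Hy.
  destruct (A2_eq_dec a A0) as [Za|Za]; [contradiction|].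
  rewrite addA_0r, Hinv in Hy.
  destruct Hy as [t [[Ht1 Ht2] Ht]]. apply some_inj in Ht; rename Ht into Hu.
  assert (Hn : norm2A a = 1).
  { assert (E : norm2A (mulA a (revA a)) = 1) by (rewrite Haa; unfold norm2A, A1; simpl; ring).
    rewrite norm2_mul in E.
    assert (norm2A (revA a) = norm2A a) by (destruct a; unfold norm2A, revA; simpl; ring).
    rewrite H in E. generalize (norm2_ge0 a); nra. }
  assert (E2 : norm2A (mulA (mulA a (addA A1 Ae1)) (revA a)) = 2).
  { rewrite !norm2_mul, norm2_rev, Hn. unfold norm2A, A1, Ae1, addA; simpl; ring. }
  assert (E3 : mulA (mulA a (addA A1 Ae1)) (revA a) = addA A1 (mkA (cos t) (sin t) 0 0)).
  { rewrite mulA_addr, mulA_addl, mulA_1r, Haa, Hu. reflexivity. }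
  rewrite E3 in E2. unfold norm2A, A1, addA in E2; simpl in E2.
  assert (Hst := sin2_cos2 t). unfold Rsqr in Hst.
  assert (Hs : 0 < sin t) by (apply sin_gt_0; auto).
  assert (Hcos : cos t = 0) by nra.
  assert (Hsin : sin t = 1) by nra.
  rewrite Hcos, Hsin in Hu. fold Ae1 in Hu.
  assert (Hcom : mulA a Ae1 = mulA Ae1 a).
  { rewrite <- Hu at 2. rewrite <- mulA_assoc, (mul_comm_one _ _ Haa), mulA_1r. reflexivity. }
  clear - Hcom Haa.
  destruct a as [w x y z].
  assert (C2 := f_equal q2 Hcom); assert (C3 := f_equal q3 Hcom).
  assert (A0' := f_equal q0 Haa); assert (A1' := f_equal q1 Haa).
  unfold mulA, Ae1, revA, A1 in C2, C3, A0', A1'; simpl in C2, C3, A0', A1'.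
  assert (y = 0) by lra. assert (z = 0) by lra. subst y z.
  assert (Hx : x = 0) by nra. subst x.
  assert (Hw : w = 1 \/ w = -1) by (assert ((w-1)*(w+1) = 0) by nra;
    destruct (Rmult_integral _ _ H); [left|right]; lra).
  exists w; split; auto.
  unfold scaleV, IV; cbn [va vb vc vd]; f_equal; apply A2eq; unfold scaleA, A1, A0; simpl; ring.
Qed.

Lemma line_inv A L : is_vahlen A -> line_act (invV A) (line_act A L) = L.
Proof. intros HA; destruct L; unfold line_act; simpl; rewrite !mob_inv_l; auto. Qed.

Lemma flag_inv A F : is_vahlen A -> flag_act (invV A) (flag_act A F) = F.
Proof. intros HA. rewrite <- flag_act_comp by (apply mob_comp_v; auto).
  rewrite F2 by auto. apply flag_act_id, mob_IV. Qed.

Lemma trans A B P L F : is_vahlen A -> is_vahlen B -> is_vahlen P ->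
  line_act A L = line_act P Lv -> flag_act A F = flag_act P Fh ->
  line_act B L = Lv -> flag_act B F = Fh ->
  exists e, (e = 1 \/ e = -1) /\ mulV (mulV B (invV A)) P = scaleV e IV.
Proof.
  intros HA HB HP HAL HAF HBL HBF. apply stab.
  - apply det1_mul; auto. apply det1_mul; [apply HB| apply invV_vahlen; auto].
  - rewrite line_act_comp by (apply mob_comp_v; auto).
    rewrite line_act_comp by (apply mob_comp_inv; auto).
    rewrite <- HAL, line_inv; auto.
  - rewrite flag_act_comp by (apply mob_comp_v; auto).
    rewrite flag_act_comp by (apply mob_comp_inv; auto).
    rewrite <- HAF, flag_inv; auto.
Qed.

Lemma cancel_r A M : is_vahlen A -> mulV (mulV M (invV A)) A = M.
Proof. intros; rewrite <- mulV_assoc, F2, mulV_IVr; auto. Qed.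

Lemma cancel_r2 A M : is_vahlen A -> mulV (mulV M A) (invV A) = M.
Proof. intros; rewrite <- mulV_assoc, F1, mulV_IVr; auto. Qed.

Lemma solveP A B P e : is_vahlen A -> is_vahlen B ->
  mulV (mulV B (invV A)) P = scaleV e IV -> P = scaleV e (mulV A (invV B)).
Proof.
  intros HA HB H.
  transitivity (mulV A (mulV (invV B) (mulV (mulV B (invV A)) P))).
  - rewrite !mulV_assoc, cancel_r, F1, mulV_IVl; auto.
  - rewrite H, mulV_scaler, mulV_scaler, mulV_IVr; auto.
Qed.

Lemma chain i1 i2 i3 i4 i5 i6 P1 P2 P3 P4 P5 P6 e1 e2 e3 e4 e5 e6 :
  is_vahlen i1 -> is_vahlen i2 -> is_vahlen i3 -> is_vahlen i4 -> is_vahlen i5 -> is_vahlen i6 ->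
  is_vahlen P4 -> is_vahlen P5 -> is_vahlen P6 ->
  P1 = scaleV e1 (mulV i1 (invV i2)) -> P2 = scaleV e2 (mulV i2 (invV i3)) ->
  P3 = scaleV e3 (mulV i3 (invV i4)) -> P4 = scaleV e4 (mulV i4 (invV i5)) ->
  P5 = scaleV e5 (mulV i5 (invV i6)) -> P6 = scaleV e6 (mulV i6 (invV i1)) ->
  mulV (mulV P1 P2) P3 =
  scaleV (e1*e2*e3*(e4*e5*e6)) (mulV (mulV (invV P6) (invV P5)) (invV P4)).
Proof.
  intros H1 H2 H3 H4 H5 H6 HP4 HP5 HP6 E1 E2 E3 E4 E5 E6.
  assert (Z : mulV (mulV (mulV P1 P2) P3) (mulV (mulV P4 P5) P6) = scaleV (e1*e2*e3*(e4*e5*e6)) IV).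
  { rewrite E1, E2, E3, E4, E5, E6.
    repeat (rewrite mulV_scalel || rewrite mulV_scaler || rewrite scaleV_scaleV).
    rewrite !mulV_assoc.
    rewrite !cancel_r, F1 by auto. f_equal; ring. }
  transitivity (mulV (mulV (mulV P1 P2) P3)
      (mulV (mulV (mulV P4 P5) P6) (mulV (mulV (invV P6) (invV P5)) (invV P4)))).
  - rewrite !mulV_assoc. rewrite !cancel_r2 by auto. reflexivity.
  - rewrite mulV_assoc, Z, scaleV_IV. reflexivity.
Qed.

Definition SA (u : nat -> A2) : A2 :=
  mkA (Series (fun n => q0 (u n))) (Series (fun n => q1 (u n)))
      (Series (fun n => q2 (u n))) (Series (fun n => q3 (u n))).

Fixpoint sumA (n : nat) (f : nat -> A2) : A2 :=
  match n with O => f O | S m => addA (sumA m f) (f (S m)) end.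

Lemma p_sumA (p : A2 -> R) (Hp : forall x y, p (addA x y) = p x + p y) n f :
  p (sumA n f) = sum_f_R0 (fun k => p (f k)) n.
Proof. induction n; simpl; auto. rewrite Hp, IHn; auto. Qed.

Definition conv (a b : nat -> R) (n : nat) := sum_f_R0 (fun k => a k * b (n - k)%nat) n.

Lemma cauchy a b : ex_series (fun n => Rabs (a n)) -> ex_series (fun n => Rabs (b n)) ->
  is_series (conv a b) (Series a * Series b).
Proof.
  intros Ha Hb. apply is_series_mult; auto; apply Series_correct, ex_series_Rabs; auto.
Qed.

Lemma lin4 s1 s2 s3 s4 f1 f2 f3 f4 l1 l2 l3 l4 :
  is_series f1 l1 -> is_series f2 l2 -> is_series f3 l3 -> is_series f4 l4 ->
  is_series (fun n => s1 * f1 n + s2 * f2 n + s3 * f3 n + s4 * f4 n)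
            (s1 * l1 + s2 * l2 + s3 * l3 + s4 * l4).
Proof.
  intros H1 H2 H3 H4.
  apply (is_series_scal_l s1) in H1; apply (is_series_scal_l s2) in H2;
  apply (is_series_scal_l s3) in H3; apply (is_series_scal_l s4) in H4.
  assert (H := is_series_plus _ _ _ _ (is_series_plus _ _ _ _ (is_series_plus _ _ _ _ H1 H2) H3) H4).
  exact H.
Qed.

Lemma sum4 s1 s2 s3 s4 f1 f2 f3 f4 n :
  sum_f_R0 (fun k => s1 * f1 k + s2 * f2 k + s3 * f3 k + s4 * f4 k) n =
  s1 * sum_f_R0 f1 n + s2 * sum_f_R0 f2 n + s3 * sum_f_R0 f3 n + s4 * sum_f_R0 f4 n.
Proof. induction n; simpl; [ring| rewrite IHn; ring]. Qed.

Definition absc (u : nat -> A2) : Prop :=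
  ex_series (fun n => Rabs (q0 (u n))) /\ ex_series (fun n => Rabs (q1 (u n))) /\
  ex_series (fun n => Rabs (q2 (u n))) /\ ex_series (fun n => Rabs (q3 (u n))).

Lemma lin4' s1 s2 s3 s4 f1 f2 f3 f4 l1 l2 l3 l4 (g : nat -> R) L :
  is_series f1 l1 -> is_series f2 l2 -> is_series f3 l3 -> is_series f4 l4 ->
  L = s1 * l1 + s2 * l2 + s3 * l3 + s4 * l4 ->
  (forall n, g n = s1 * f1 n + s2 * f2 n + s3 * f3 n + s4 * f4 n) ->
  is_series g L.
Proof. intros H1 H2 H3 H4 -> Hg. eapply is_series_ext; [intros n; symmetry; apply Hg|].
  apply lin4; auto. Qed.

Ltac compo s1 s2 s3 s4 Ua Vb Uc Vd Ue Vf Ug Vh prj :=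
  symmetry; apply is_series_unique;
  eapply (lin4' s1 s2 s3 s4);
  [ apply cauchy; [exact Ua|exact Vb] | apply cauchy; [exact Uc|exact Vd]
  | apply cauchy; [exact Ue|exact Vf] | apply cauchy; [exact Ug|exact Vh]
  | ring
  | intros n; rewrite (p_sumA prj) by (intros; reflexivity); unfold conv; rewrite <- sum4;
    apply sum_eq; intros; simpl; ring ].

Lemma SA_mul u v : absc u -> absc v ->
  mulA (SA u) (SA v) = SA (fun n => sumA n (fun k => mulA (u k) (v (n - k)%nat))).
Proof.
  intros [U0 [U1 [U2 U3]]] [V0 [V1 [V2 V3]]].
  apply A2eq; unfold SA; simpl.
  - compo 1 (-1) (-1) (-1) U0 V0 U1 V1 U2 V2 U3 V3 q0.
  - compo 1 1 1 (-1) U0 V1 U1 V0 U2 V3 U3 V2 q1.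
  - compo 1 (-1) 1 1 U0 V2 U1 V3 U2 V0 U3 V1 q2.
  - compo 1 1 (-1) 1 U0 V3 U1 V2 U2 V1 U3 V0 q3.
Qed.

Definition eu (y : A2) (m : nat) : A2 := scaleA (/ INR (Factorial.fact m)) (powA y m).

Lemma expA_SA y : expA y = SA (eu y).
Proof. unfold expA, SA, eu; apply A2eq; simpl; apply Series_ext; intros; unfold Rdiv; ring. Qed.

Lemma norm2_pow y m : norm2A (powA y m) = norm2A y ^ m.
Proof. induction m; simpl. - unfold norm2A, A1; simpl; ring. - rewrite norm2_mul, IHm; ring. Qed.

Lemma exp_ser K : ex_series (fun m => K ^ m / INR (Factorial.fact m)).
Proof. exists (exp K). eapply is_series_ext; [|apply (is_exp_Reals K)].
  intros n; simpl. rewrite pow_n_pow. unfold scal; simpl; unfold mult; simpl; unfold Rdiv; ring. Qed.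

Lemma comp_bound (c : R) x m K : c ^ 2 <= norm2A x -> norm2A x <= (K ^ m) ^ 2 -> 0 <= K ->
  Rabs c <= K ^ m.
Proof. intros H1 H2 HK. assert (0 <= K ^ m) by (apply pow_le; auto).
  rewrite <- (Rabs_pos_eq (K ^ m)) by auto. apply Rsqr_le_abs_0. unfold Rsqr; nra. Qed.

Lemma pow_bound y m : norm2A (powA y m) <= ((1 + norm2A y) ^ m) ^ 2.
Proof. rewrite norm2_pow, <- pow_mult, Nat.mul_comm, pow_mult. apply pow_incr.
  generalize (norm2_ge0 y); intros; split; nra. Qed.

Lemma abs_ser (f : nat -> R) y :
  (forall m, f m ^ 2 <= norm2A (powA y m)) ->
  ex_series (fun m => Rabs (/ INR (Factorial.fact m) * f m)).
Proof.
  intros Hf. apply (@ex_series_le R_AbsRing R_CompleteNormedModule _ (fun m => (1 + norm2A y) ^ m / INR (Factorial.fact m))); [|apply exp_ser].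
  intros m. change (norm (Rabs (/ INR (Factorial.fact m) * f m))) with (Rabs (Rabs (/ INR (Factorial.fact m) * f m))).
  rewrite Rabs_Rabsolu, Rabs_mult, Rabs_pos_eq by (left; apply Rinv_0_lt_compat, INR_fact_lt_0).
  unfold Rdiv. rewrite Rmult_comm. apply Rmult_le_compat_r; [left; apply Rinv_0_lt_compat, INR_fact_lt_0|].
  apply (comp_bound _ (powA y m)); auto. apply pow_bound. generalize (norm2_ge0 y); lra.
Qed.

Lemma absc_eu y : absc (eu y).
Proof.
  unfold absc, eu; simpl; repeat split;
  [apply (abs_ser (fun m => q0 (powA y m)) y)|apply (abs_ser (fun m => q1 (powA y m)) y)
  |apply (abs_ser (fun m => q2 (powA y m)) y)|apply (abs_ser (fun m => q3 (powA y m)) y)];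
  intros m; destruct (powA y m); unfold norm2A; simpl; nra.
Qed.

Lemma powA_comm y m : mulA (powA y m) y = mulA y (powA y m).
Proof. induction m; simpl. - rewrite mulA_1l, mulA_1r; auto.
  - rewrite <- mulA_assoc, IHm; auto. Qed.

Lemma powA_add y k j : mulA (powA y k) (powA y j) = powA y (k + j).
Proof. induction k; simpl. - apply mulA_1l. - rewrite <- mulA_assoc, IHk; auto. Qed.

Lemma scale_mul_opp y r z : mulA (oppA y) (scaleA r z) = scaleA (-1 * r) (mulA y z).
Proof. a2ring. Qed.

Lemma powA_opp y m : powA (oppA y) m = scaleA ((-1) ^ m) (powA y m).
Proof. induction m; simpl. - a2ring. - rewrite IHm, scale_mul_opp; auto. Qed.

Lemma revA_pow y m : revA (powA y m) = powA (revA y) m.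
Proof. induction m; simpl. - apply revA_1. - rewrite revA_mul, IHm, powA_comm; auto. Qed.

Lemma sumA_ext n f g : (forall k, (k <= n)%nat -> f k = g k) -> sumA n f = sumA n g.
Proof. induction n; intros H; simpl. - apply H; lia. - rewrite (IHn (fun k Hk => H k (le_S _ _ Hk))), H; auto. Qed.

Lemma sumA_scale n (c : nat -> R) X : sumA n (fun k => scaleA (c k) X) = scaleA (sum_f_R0 c n) X.
Proof. induction n; simpl; auto. rewrite IHn. a2ring. Qed.

Lemma scale_mul_scale r x s z : mulA (scaleA r x) (scaleA s z) = scaleA (r * s) (mulA x z).
Proof. a2ring. Qed.

Lemma scaleA_scaleA r s x : scaleA r (scaleA s x) = scaleA (r * s) x. Proof. a2ring. Qed.

Lemma w_form y n : sumA n (fun k => mulA (eu y k) (eu (oppA y) (n - k)%nat)) =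
  scaleA (sum_f_R0 (fun k => / INR (Factorial.fact k) * (/ INR (Factorial.fact (n - k)) * (-1) ^ (n - k))) n)
         (powA y n).
Proof.
  rewrite <- sumA_scale. apply sumA_ext; intros k Hk. unfold eu.
  rewrite powA_opp, scaleA_scaleA, scale_mul_scale, powA_add.
  replace (k + (n - k))%nat with n by lia. f_equal; ring.
Qed.

Lemma coef_sum n : sum_f_R0 (fun k => / INR (Factorial.fact k) *
     (/ INR (Factorial.fact (n - k)) * (-1) ^ (n - k))) n = 0 ^ n / INR (Factorial.fact n).
Proof.
  replace 0 with (1 + -1) by ring. rewrite binomial. unfold Rdiv. rewrite Rmult_comm, scal_sum.
  apply sum_eq; intros i Hi. unfold Binomial.C. rewrite pow1.
  assert (H1 := INR_fact_neq_0 i); assert (H2 := INR_fact_neq_0 (n - i)); assert (H3 := INR_fact_neq_0 n).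
  field; auto.
Qed.

Lemma zero_series : is_series (fun _ : nat => 0) 0.
Proof.
  apply is_series_Reals. intros eps He. exists O; intros n _.
  assert (E : sum_f_R0 (fun _ : nat => 0) n = 0) by (induction n; simpl; [|rewrite IHn]; ring).
  rewrite E. unfold R_dist. rewrite Rminus_0_r, Rabs_R0; auto.
Qed.

Lemma series_head a : (forall n, a (S n) = 0) -> Series a = a O.
Proof.
  intros H. apply is_series_unique. apply is_series_decr_1.
  eapply is_series_ext; [intros n; symmetry; apply H|].
  match goal with |- is_series _ ?l => replace l with 0 end;
    [apply zero_series| change (0 = a O + - a O); ring].
Qed.

Lemma exp_inv y : mulA (expA y) (expA (oppA y)) = A1.
Proof.
  rewrite !expA_SA, SA_mul by apply absc_eu.
  unfold SA; apply A2eq; simpl;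
  (rewrite series_head; [rewrite w_form; simpl; field|
     intros n; rewrite w_form, coef_sum; simpl; unfold Rdiv; rewrite !Rmult_0_l; ring]).
Qed.

Lemma exp_rev y : revA (expA y) = expA (revA y).
Proof.
  unfold expA, revA at 1; apply A2eq; cbn [q0 q1 q2 q3].
  - apply Series_ext; intros m; rewrite <- revA_pow; reflexivity.
  - apply Series_ext; intros m; rewrite <- revA_pow; reflexivity.
  - apply Series_ext; intros m; rewrite <- revA_pow; reflexivity.
  - rewrite <- Series_opp. apply Series_ext; intros m; rewrite <- revA_pow. simpl. unfold Rdiv; ring.
Qed.

Lemma cosh_plus_sinh d : addA (coshA d) (sinhA d) = expA d.
Proof. unfold coshA, sinhA, subA. generalize (expA d) (expA (oppA (revA d))). intros [a b c e] [f g h i].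
  apply A2eq; simpl; field. Qed.
Lemma cosh_minus_sinh d : subA (coshA d) (sinhA d) = expA (oppA (revA d)).
Proof. unfold coshA, sinhA, subA. generalize (expA d) (expA (oppA (revA d))). intros [a b c e] [f g h i].
  apply A2eq; simpl; field. Qed.

Lemma inv_rev_exp d : invA (revA (expA d)) = expA (oppA (revA d)).
Proof. rewrite exp_rev. symmetry; apply inv_unique, exp_inv. Qed.

Lemma invA_opp x : invA (oppA x) = oppA (invA x).
Proof. assert (H : norm2A (oppA x) = norm2A x) by (destruct x; unfold norm2A, oppA; simpl; ring).
  unfold invA. rewrite H. generalize (/ norm2A x). intros r. a2ring. Qed.

Lemma diag_form d a : (expA d = a \/ expA d = oppA a) ->
  exists s, (s = 1 \/ s = -1) /\ a = scaleA s (addA (coshA d) (sinhA d)) /\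
            invA (revA a) = scaleA s (subA (coshA d) (sinhA d)).
Proof.
  rewrite cosh_plus_sinh, cosh_minus_sinh, <- inv_rev_exp.
  intros [E|E].
  - exists 1; split; [left; auto|]. subst a. split; a2ring.
  - exists (-1); split; [right; auto|].
    assert (a = oppA (expA d)) by (rewrite E; a2ring). subst a. clear E.
    split; [a2ring|]. rewrite revA_opp, invA_opp. generalize (invA (revA (expA d))). a2ring.
Qed.

Lemma mulA_rA k x : mulA (rA k) x = scaleA k x. Proof. a2ring. Qed.
Lemma mulA_scl r x y : mulA (scaleA r x) y = scaleA r (mulA x y). Proof. a2ring. Qed.
Lemma mulA_scr r x y : mulA x (scaleA r y) = scaleA r (mulA x y). Proof. a2ring. Qed.
Lemma revA_scale r x : revA (scaleA r x) = scaleA r (revA x). Proof. a2ring. Qed.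

Ltac qnorm2 := unfold subA; repeat progress (rewrite ?mulA_rA, ?revA_add, ?revA_opp, ?revA_mul, ?revA_scale, ?revA_0,
  ?mulA_addl, ?mulA_addr, ?mulA_oppl, ?mulA_oppr, ?mulA_scl, ?mulA_scr, ?mulA_0l, ?mulA_0r);
  rewrite <- ?mulA_assoc.

Ltac a2field := intros; repeat (match goal with H : ?P |- _ => match type of P with Prop => clear H end end);
  repeat (match goal with x : A2 |- _ => destruct x end);
  apply A2eq; unfold mulA, addA, subA, oppA, scaleA, revA, rA, A0, A1; simpl; field.

Ltac a2acf := repeat (match goal with |- context [mulA ?x ?y] => generalize (mulA x y); intro end); a2field.

Lemma dbl_inj x y : addA x x = addA y y -> x = y.
Proof. intros H. transitivity (scaleA (/2) (addA x x)); [a2field|rewrite H; a2field]. Qed.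

Ltac a2lin := apply A2eq; unfold addA, subA, oppA, scaleA, revA, rA, A0, A1; simpl; ring.
Ltac a2ac2 := repeat (match goal with |- context [mulA ?x ?y] => generalize (mulA x y); intro end); a2lin.

Lemma fin_all c1 s1 c2 s2 c3 s3 c4 s4 c5 s5 c6 s6 (k : R) :
  mulV (mulV (mkV (addA c1 s1) A0 A0 (subA c1 s1)) (mkV c2 s2 s2 c2)) (mkV (addA c3 s3) A0 A0 (subA c3 s3))
  = scaleV k (mulV (mulV (invV (mkV c6 s6 s6 c6)) (mkV (revA (subA c5 s5)) A0 A0 (revA (addA c5 s5))))
                   (invV (mkV c4 s4 s4 c4))) ->
  addA (mulA (mulA s1 c2) s3) (mulA (mulA c1 c2) c3)
  = mulA (rA k) (revA (addA (mulA (mulA s4 c5) s6) (mulA (mulA c4 c5) c6))) /\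
  addA (mulA (mulA s1 c2) c3) (mulA (mulA c1 c2) s3)
  = mulA (rA k) (revA (subA (mulA (mulA s4 s5) s6) (mulA (mulA c4 s5) c6))) /\
  subA (mulA (mulA s1 s2) s3) (mulA (mulA c1 s2) c3)
  = mulA (rA k) (revA (addA (mulA (mulA s4 c5) c6) (mulA (mulA c4 c5) s6))) /\
  subA (mulA (mulA s1 s2) c3) (mulA (mulA c1 s2) s3)
  = mulA (rA k) (revA (subA (mulA (mulA s4 s5) c6) (mulA (mulA c4 s5) s6))).
Proof.
  intros H.
  remember (mulV (mulV (mkV (addA c1 s1) A0 A0 (subA c1 s1)) (mkV c2 s2 s2 c2)) (mkV (addA c3 s3) A0 A0 (subA c3 s3))) as Xm.
  remember (mulV (mulV (invV (mkV c6 s6 s6 c6)) (mkV (revA (subA c5 s5)) A0 A0 (revA (addA c5 s5))))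
                   (invV (mkV c4 s4 s4 c4))) as Ym.
  split; [|split; [|split]]; apply dbl_inj.
  - transitivity (addA (va Xm) (vd Xm)).
    { subst Xm; unfold mulV; cbn [va vb vc vd]. qnorm2. a2ac2. }
    rewrite H. subst Ym. unfold mulV, invV, scaleV; cbn [va vb vc vd]. qnorm2. a2ac2.
  - transitivity (subA (va Xm) (vd Xm)).
    { subst Xm; unfold mulV; cbn [va vb vc vd]. qnorm2. a2ac2. }
    rewrite H. subst Ym. unfold mulV, invV, scaleV; cbn [va vb vc vd]. qnorm2. a2ac2.
  - transitivity (oppA (addA (vb Xm) (vc Xm))).
    { subst Xm; unfold mulV; cbn [va vb vc vd]. qnorm2. a2ac2. }
    rewrite H. subst Ym. unfold mulV, invV, scaleV; cbn [va vb vc vd]. qnorm2. a2ac2.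
  - transitivity (subA (vb Xm) (vc Xm)).
    { subst Xm; unfold mulV; cbn [va vb vc vd]. qnorm2. a2ac2. }
    rewrite H. subst Ym. unfold mulV, invV, scaleV; cbn [va vb vc vd]. qnorm2. a2ac2.
Qed.

Lemma diag_scale s p m : mkV (scaleA s p) A0 A0 (scaleA s m) = scaleV s (mkV p A0 A0 m).
Proof. unfold scaleV; cbn [va vb vc vd]; f_equal; a2ring. Qed.

Lemma invdiag_form a s c sh : a = scaleA s (addA c sh) -> invA (revA a) = scaleA s (subA c sh) ->
  invV (diagV a) = scaleV s (mkV (revA (subA c sh)) A0 A0 (revA (addA c sh))).
Proof. intros E1 E2. unfold invV, diagV; cbn [va vb vc vd]. rewrite E2, E1.
  unfold scaleV; cbn [va vb vc vd]; f_equal; a2ring. Qed.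

Lemma diag_form2 a s c sh : a = scaleA s (addA c sh) -> invA (revA a) = scaleA s (subA c sh) ->
  diagV a = scaleV s (mkV (addA c sh) A0 A0 (subA c sh)).
Proof. intros E1 E2. unfold diagV. rewrite E2, E1. apply diag_scale. Qed.

Lemma sq1 s : s = 1 \/ s = -1 -> s * s = 1.
Proof. intros [->| ->]; ring. Qed.

Theorem theorem1p1
  (L1 L3 L5 : Line) (F2 F4 F6 : Flag) (d1 d2 d3 d4 d5 d6 : A2) :
  is_line L1 -> is_line L3 -> is_line L5 ->
  is_flag F2 -> is_flag F4 -> is_flag F6 ->
  orthogonal L1 F2 -> orthogonal L3 F2 -> orthogonal L3 F4 ->
  orthogonal L5 F4 -> orthogonal L5 F6 -> orthogonal L1 F6 ->
  quat_hsl d1 L1 F6 F2 -> cplx_hsl d2 F2 L1 L3 ->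
  quat_hsl d3 L3 F2 F4 -> cplx_hsl d4 F4 L3 L5 ->
  quat_hsl d5 L5 F4 F6 -> cplx_hsl d6 F6 L5 L1 ->
  exists eps : R, (eps = 1 \/ eps = -1) /\
    addA (mulA (mulA (sinhA d1) (coshA d2)) (sinhA d3))
         (mulA (mulA (coshA d1) (coshA d2)) (coshA d3))
    = mulA (rA eps) (revA
        (addA (mulA (mulA (sinhA d4) (coshA d5)) (sinhA d6))
              (mulA (mulA (coshA d4) (coshA d5)) (coshA d6)))) /\
    addA (mulA (mulA (sinhA d1) (coshA d2)) (coshA d3))
         (mulA (mulA (coshA d1) (coshA d2)) (sinhA d3))
    = mulA (rA eps) (revA
        (subA (mulA (mulA (sinhA d4) (sinhA d5)) (sinhA d6))
              (mulA (mulA (coshA d4) (sinhA d5)) (coshA d6)))) /\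
    subA (mulA (mulA (sinhA d1) (sinhA d2)) (sinhA d3))
         (mulA (mulA (coshA d1) (sinhA d2)) (coshA d3))
    = mulA (rA eps) (revA
        (addA (mulA (mulA (sinhA d4) (coshA d5)) (coshA d6))
              (mulA (mulA (coshA d4) (coshA d5)) (sinhA d6)))) /\
    subA (mulA (mulA (sinhA d1) (sinhA d2)) (coshA d3))
         (mulA (mulA (coshA d1) (sinhA d2)) (sinhA d3))
    = mulA (rA eps) (revA
        (subA (mulA (mulA (sinhA d4) (sinhA d5)) (coshA d6))
              (mulA (mulA (coshA d4) (sinhA d5)) (sinhA d6)))).
Proof.
  intros _ _ _ _ _ _ _ _ _ _ _ _ Q1 C2 Q3 C4 Q5 C6.
  destruct Q1 as [i1 [a1 [Hi1 [HL1 [HF1 [Ha1 [HD1 [HD1L [HD1F HE1]]]]]]]]].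
  destruct Q3 as [i3 [a3 [Hi3 [HL3 [HF3 [Ha3 [HD3 [HD3L [HD3F HE3]]]]]]]]].
  destruct Q5 as [i5 [a5 [Hi5 [HL5 [HF5 [Ha5 [HD5 [HD5L [HD5F HE5]]]]]]]]].
  destruct C2 as [_ [_ [i2 [Hi2 [HF2 [HL2 [HM2 [HM2F HM2L]]]]]]]].
  destruct C4 as [_ [_ [i4 [Hi4 [HF4 [HL4 [HM4 [HM4F HM4L]]]]]]]].
  destruct C6 as [_ [_ [i6 [Hi6 [HF6 [HL6 [HM6 [HM6F HM6L]]]]]]]].
  destruct (trans i1 i2 (diagV a1) L1 F2) as [e1 [He1 S1]]; auto.
  { rewrite HL1, HD1L; auto. }
  destruct (trans i2 i3 (Mdelta d2) L3 F2) as [e2 [He2 S2]]; auto.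
  { rewrite HF2, HM2F; auto. }
  destruct (trans i3 i4 (diagV a3) L3 F4) as [e3 [He3 S3]]; auto.
  { rewrite HL3, HD3L; auto. }
  destruct (trans i4 i5 (Mdelta d4) L5 F4) as [e4 [He4 S4]]; auto.
  { rewrite HF4, HM4F; auto. }
  destruct (trans i5 i6 (diagV a5) L5 F6) as [e5 [He5 S5]]; auto.
  { rewrite HL5, HD5L; auto. }
  destruct (trans i6 i1 (Mdelta d6) L1 F6) as [e6 [He6 S6]]; auto.
  { rewrite HF6, HM6F; auto. }
  apply solveP in S1; auto. apply solveP in S2; auto. apply solveP in S3; auto.
  apply solveP in S4; auto. apply solveP in S5; auto. apply solveP in S6; auto.
  assert (CH := chain i1 i2 i3 i4 i5 i6 _ _ _ _ _ _ e1 e2 e3 e4 e5 e6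
                 Hi1 Hi2 Hi3 Hi4 Hi5 Hi6 HM4 HD5 HM6 S1 S2 S3 S4 S5 S6).
  destruct (diag_form _ _ HE1) as [s1 [Hs1 [A1e A1i]]].
  destruct (diag_form _ _ HE3) as [s3 [Hs3 [A3e A3i]]].
  destruct (diag_form _ _ HE5) as [s5 [Hs5 [A5e A5i]]].
  rewrite (invdiag_form _ _ _ _ A5e A5i) in CH.
  rewrite (diag_form2 _ _ _ _ A1e A1i), (diag_form2 _ _ _ _ A3e A3i) in CH.
  set (E := e1 * e2 * e3 * (e4 * e5 * e6)) in CH.
  unfold Mdelta in CH.
  repeat (rewrite mulV_scalel in CH || rewrite mulV_scaler in CH || rewrite scaleV_scaleV in CH).
  set (X0 := mulV (mulV (mkV (addA (coshA d1) (sinhA d1)) A0 A0 (subA (coshA d1) (sinhA d1)))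
                  (mkV (coshA d2) (sinhA d2) (sinhA d2) (coshA d2)))
                  (mkV (addA (coshA d3) (sinhA d3)) A0 A0 (subA (coshA d3) (sinhA d3)))) in CH.
  set (Y0 := mulV (mulV (invV (mkV (coshA d6) (sinhA d6) (sinhA d6) (coshA d6)))
                  (mkV (revA (subA (coshA d5) (sinhA d5))) A0 A0 (revA (addA (coshA d5) (sinhA d5)))))
                  (invV (mkV (coshA d4) (sinhA d4) (sinhA d4) (coshA d4)))) in CH.
  assert (HX : X0 = scaleV (s1 * s3 * (E * s5)) Y0).
  { transitivity (scaleV (s1 * s3) (scaleV (s1 * s3) X0)).
    - rewrite scaleV_scaleV. replace (s1 * s3 * (s1 * s3)) with ((s1 * s1) * (s3 * s3)) by ring.
      rewrite sq1, sq1, Rmult_1_l, scaleV_1 by auto. reflexivity.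
    - rewrite CH, scaleV_scaleV. f_equal; ring. }
  exists (s1 * s3 * (E * s5)). split.
  - unfold E. destruct Hs1 as [-> | ->], Hs3 as [-> | ->], Hs5 as [-> | ->],
      He1 as [-> | ->], He2 as [-> | ->], He3 as [-> | ->], He4 as [-> | ->], He5 as [-> | ->],
      He6 as [-> | ->]; first [left; ring | right; ring].
  - apply fin_all. exact HX.
Qed.
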